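(* For fixed $x,z\in\mathbb{R}$, $$\lim_{n\to+\infty}n(2\ln n)^{-1/2}D_n\big((1+z/\ln n)G_n(x)/2\big)=e^{c_0-x-2z},$$ where $G_n(x)=\dfrac{8x-5\ln(2\ln n)}{2n(2\ln n)^{1/2}}+\dfrac{(32\ln n)^{1/2}}{n}$.
   Context: For $\alpha\in(0,\pi)$ let $D_n(\alpha)=\det_{1\le j,l\le n}\left(\frac{1}{2\pi}\int_\alpha^{2\pi-\alpha}e^{i(j-l)\theta}\,d\theta\right)$ (the probability that a Haar unitary $n\times n$ matrix has no eigenvalue on a given arc of length $2\alpha$). By a result of Deift–Its–Krasovsky–Zhou there are constants $c_0\in\mathbb{R}$ and $s_0>0$ such that for every $\varepsilon>0$, uniformly in $s_0/n<\alpha<\pi-\varepsilon$, $$\ln D_n(\alpha)=n^2\ln\cos\frac{\alpha}{2}-\frac14\ln\Big(n\sin\frac{\alpha}{2}\Big)+c_0+O\Big(\frac{1}{n\sin(\alpha/2)}\Big).$$ $c_0$ denotes this constant. *)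

(* Defs.v *)
From mathcomp Require Import all_boot all_order all_algebra.
From mathcomp Require Import all_classical all_reals all_analysis.
From mathcomp Require Import complex.
Set Implicit Arguments. Unset Strict Implicit. Unset Printing Implicit Defensive.
Import Order.TTheory GRing.Theory Num.Theory.
Local Open Scope ring_scope.
Local Open Scope complex_scope.

(* (1/2pi) \int_alpha^{2pi-alpha} e^{i k theta} d theta, with k = j - l,
   computed as (1/2pi) (\int cos(k theta) + i \int sin(k theta)) (Lebesgue integrals
   over the interval [alpha, 2pi - alpha]). *)
Definition toep_entry (R : realType) (alpha k : R) : R[i] :=
  ((2 * pi)^-1 * Rintegral (@lebesgue_measure R) `[alpha, 2 * pi - alpha]
                   (fun t => cos (k * t)))
  +i* ((2 * pi)^-1 * Rintegral (@lebesgue_measure R) `[alpha, 2 * pi - alpha]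
                   (fun t => sin (k * t))).

Definition toep_mx (R : realType) (n : nat) (alpha : R) : 'M[R[i]]_n :=
  \matrix_(j < n, l < n) toep_entry alpha ((j : nat)%:R - (l : nat)%:R).

(* D_n(alpha): the determinant (a real number; we take its real part). *)
Definition Dn (R : realType) (n : nat) (alpha : R) : R :=
  complex.Re (\det (toep_mx n alpha)).

(* c0 is "the" constant of Deift--Its--Krasovsky--Zhou: there is s0 > 0 such that
   for every eps > 0 the asymptotic expansion holds with a uniform O-term for
   s0/n < alpha < pi - eps. *)
Definition DIKZ_constant (R : realType) (c0 : R) : Prop :=
  exists2 s0 : R, 0 < s0 &
    forall eps : R, 0 < eps ->
      exists C : R, exists N : nat, forall (n : nat) (alpha : R),
        (0 < n)%N -> (N <= n)%N -> s0 / n%:R < alpha -> alpha < pi - eps ->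
        `| ln (Dn n alpha)
           - (n%:R ^+ 2 * ln (cos (alpha / 2))
              - 4^-1 * ln (n%:R * sin (alpha / 2)) + c0) |
        <= C / (n%:R * sin (alpha / 2)).

Definition Gn (R : realType) (n : nat) (x : R) : R :=
  (8 * x - 5 * ln (2 * ln n%:R)) / (2 * n%:R * Num.sqrt (2 * ln n%:R))
  + Num.sqrt (32 * ln n%:R) / n%:R.

(* Main.v *)
Require Import Defs.
From mathcomp Require Import all_boot all_order all_algebra.
From mathcomp Require Import all_classical all_reals all_analysis.
From mathcomp Require Import ring lra.
Import Order.TTheory GRing.Theory Num.Theory.
Import numFieldNormedType.Exports.
Local Open Scope classical_set_scope.
Local Open Scope ring_scope.
Section Trig.
Variable R : realType.

Lemma deriv_nonneg (f df : R -> R) : (forall x : R, is_derive x (1:R) f (df x)) -> f 0 = 0 ->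
  (forall x, 0 <= x -> 0 <= df x) -> forall y, 0 <= y -> 0 <= f y.
Proof.
move=> hd f0 hdf y; rewrite le_eqVlt => /orP [/eqP<- | y0]; first by rewrite f0.
have cf : {within `[0, y], continuous f}.
  apply: derivable_within_continuous => z _.
  exact: (@ex_derive _ _ _ _ _ _ _ (hd z)).
have [c /andP [c0 cy] eq] := MVT y0 (fun x _ => hd x) cf.
have : f y = df c * y by rewrite -[f y]subr0 -f0 eq subr0.
move=> ->; apply: mulr_ge0; last exact: ltW.
apply: hdf; move: c0; rewrite bnd_simp; exact: ltW.
Qed.

Lemma scE (a b : R) : a *: b = a * b. Proof. by []. Qed.
Lemma algE (a : R) : a%:A = a. Proof. by rewrite scE mulr1. Qed.
Lemma sin_le_x (y : R) : 0 <= y -> sin y <= y.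
Proof.
move=> y0; rewrite -subr_ge0.
apply: (@deriv_nonneg (fun y => y - sin y) (fun x => 1 - cos x)).
- by rewrite sin0 subrr.
- by move=> x _; rewrite subr_ge0 cos_le1.
- by [].
Qed.

Lemma cos_lb (y : R) : 0 <= y -> 1 - y ^+ 2 / 2 <= cos y.
Proof.
move=> y0; rewrite -subr_ge0.
apply: (@deriv_nonneg (fun y => cos y - (1 - y ^+ 2 / 2)) (fun x => x - sin x)).
- move=> x. apply: is_derive_eq.
  rewrite !scaler0 !add0r mul1r !scE. 
  by field.
- by rewrite cos0 expr0n /= mul0r subr0 subrr.
- by move=> x x0; rewrite subr_ge0 sin_le_x.
- by [].
Qed.

Lemma sin_lb (y : R) : 0 <= y -> y - y ^+ 3 / 6 <= sin y.
Proof.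
move=> y0; rewrite -subr_ge0.
apply: (@deriv_nonneg (fun y => sin y - (y - y ^+ 3 / 6)) (fun x => cos x - (1 - x ^+ 2 / 2))).
- move=> x. apply: is_derive_eq.
  rewrite !scaler0 !add0r !scE !mulr1 /=. 
  by field.
- by rewrite sin0 expr0n /= mul0r subr0 subrr.
- by move=> x x0; rewrite subr_ge0 cos_lb.
- by [].
Qed.

Lemma cos_ub (y : R) : 0 <= y -> cos y <= 1 - y ^+ 2 / 2 + y ^+ 4 / 24.
Proof.
move=> y0; rewrite -subr_ge0.
apply: (@deriv_nonneg (fun y => 1 - y ^+ 2 / 2 + y ^+ 4 / 24 - cos y) (fun x => sin x - (x - x ^+ 3 / 6))).
- move=> x. apply: is_derive_eq.
  rewrite !scaler0 !add0r !scE !mulr1 /=. 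
  by field.
- by rewrite cos0 expr0n /= mul0r subr0 expr0n /= mul0r addr0 subrr.
- by move=> x x0; rewrite subr_ge0 sin_lb.
- by [].
Qed.
End Trig.
Arguments sin_le_x {R}.
Arguments sin_lb {R}.
Arguments cos_lb {R}.
Arguments cos_ub {R}.


Section Seqs.
Variable R : realType.
Implicit Types a b : nat -> R.

Lemma inv_oo a : a @ \oo --> +oo -> (fun n => (a n)^-1) @ \oo --> 0.
Proof.
move=> ha; apply/gtr0_cvgV0 => //.
exact: (cvgry_gt ha 0).
Qed.

Lemma sqrt_oo a : a @ \oo --> +oo -> (fun n => Num.sqrt (a n)) @ \oo --> +oo.
Proof.
move=> ha; apply/cvgryPge => A.
near=> n.
have h : A ^+ 2 <= a n by near: n; apply: (cvgry_ge ha).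
apply: (le_trans (ler_norm A)).
by rewrite -sqrtr_sqr ler_sqrt // (le_trans (sqr_ge0 A)).
Unshelve. all: end_near.
Qed.

Lemma scale_oo a (k : R) : 0 < k -> a @ \oo --> +oo -> (fun n => k * a n) @ \oo --> +oo.
Proof.
move=> k0 ha; apply/cvgryPge => A.
near=> n.
have h : A / k <= a n by near: n; apply: (cvgry_ge ha).
apply: le_trans (ler_wpM2l (ltW k0) h); by rewrite mulrC divfK ?gt_eqF.
Unshelve. all: end_near.
Qed.

Lemma ln_oo a : a @ \oo --> +oo -> (fun n => ln (a n)) @ \oo --> +oo.
Proof.
move=> ha; apply/cvgryPge => A.
near=> n.
have h : expR A <= a n by near: n; apply: (cvgry_ge ha).
rewrite -[A]expRK ler_ln // posrE ?expR_gt0 //.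
exact: lt_le_trans (expR_gt0 A) h.
Unshelve. all: end_near.
Qed.

Lemma lnx_x_bound (b : R) : 1 <= b -> 0 <= ln b / b <= 2 * (Num.sqrt b)^-1.
Proof.
move=> b1; have b0 : 0 < b := lt_le_trans ltr01 b1.
apply/andP; split; first by rewrite divr_ge0 ?ln_ge0 // ltW.
set r := Num.sqrt b.
have r0 : 0 < r by rewrite sqrtr_gt0.
have br : b = r ^+ 2 by rewrite sqr_sqrtr // ltW.
rewrite br lnXn // -/r.
have hl : ln r < r by apply: ln_sublinear.
rewrite ler_pdivrMr ?exprn_gt0 //.
have -> : 2 * r^-1 * r ^+ 2 = 2 * r by field; rewrite gt_eqF.
rewrite mulr2n; lra.
Qed.

Lemma lnx_oo a : a @ \oo --> +oo -> (fun n => ln (a n) / a n) @ \oo --> 0.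
Proof.
move=> ha.
apply: (@squeeze_cvgr _ _ _ _ (fun _ => 0) (fun n => 2 * (Num.sqrt (a n))^-1)).
- near=> n; apply: lnx_x_bound; near: n; exact: (cvgry_ge ha).
- exact: cvg_cst.
- rewrite -(mulr0 2); apply: cvgM; first exact: cvg_cst.
  by apply: inv_oo; apply: sqrt_oo.
Unshelve. all: end_near.
Qed.
End Seqs.
Arguments inv_oo {R}.
Arguments sqrt_oo {R}.
Arguments scale_oo {R}.
Arguments ln_oo {R}.
Arguments lnx_oo {R}.
Arguments lnx_x_bound {R}.


Section LnCos.
Variable R : realType.

Lemma lncos_bound (y : R) : 0 <= y -> y <= 1 ->
  `|ln (cos y) + y ^+ 2 / 2| <= y ^+ 4 / 2.
Proof.
move=> y0 y1.
have c1 := cos_lb y y0.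
have c2 := cos_ub y y0.
have y2 : y ^+ 2 <= 1 by rewrite expr_le1.
have y42 : y ^+ 4 <= y ^+ 2.
  by rewrite (_ : 4 = 2 + 2)%N // exprD ler_piMl ?exprn_ge0.
have cpos : 0 < cos y by lra.
have up : ln (cos y) <= cos y - 1.
  have := @le_ln1Dx R (cos y - 1).
  have -> : 1 + (cos y - 1) = cos y by ring.
  apply; lra.
have lo : 1 - (cos y)^-1 <= ln (cos y).
  have := @le_ln1Dx R ((cos y)^-1 - 1).
  have -> : 1 + ((cos y)^-1 - 1) = (cos y)^-1 by ring.
  rewrite lnV ?posrE //.
  have : 0 < (cos y)^-1 by rewrite invr_gt0.
  move=> h1 h2; have := h2 ltac:(lra); lra.
set k := (cos y)^-1 in lo.
have kc : k * cos y = 1 by rewrite mulVf // gt_eqF.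
have k0 : 0 < k by rewrite invr_gt0.
have kb : k <= 1 + y ^+ 2 / 2 + y ^+ 4 / 2.
  have m0 : 0 < 1 - y ^+ 2 / 2 by lra.
  have h1 : k * (1 - y ^+ 2 / 2) <= 1.
    rewrite -[X in _ <= X]kc; apply: ler_wpM2l; lra.
  have h2 : 1 <= (1 - y ^+ 2 / 2) * (1 + y ^+ 2 / 2 + y ^+ 4 / 2).
    have -> : (1 - y ^+ 2 / 2) * (1 + y ^+ 2 / 2 + y ^+ 4 / 2) =
              1 + (y ^+ 4 / 4) * (1 - y ^+ 2) by field.
    have : 0 <= (y ^+ 4 / 4) * (1 - y ^+ 2).
      apply: mulr_ge0; last lra.
      apply: divr_ge0 => //; exact: exprn_ge0.
    lra.
  have : k * (1 - y ^+ 2 / 2) <= (1 - y ^+ 2 / 2) * (1 + y ^+ 2 / 2 + y ^+ 4 / 2) by lra.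
  by rewrite mulrC ler_pM2l.
have y4 : 0 <= y ^+ 4 by rewrite exprn_ge0.
rewrite ler_norml; apply/andP; split; lra.
Qed.
End LnCos.
Arguments lncos_bound {R}.

Lemma cvg_near_eq (R : realType) (f g : nat -> R) (l : R) :
  (\forall n \near \oo, f n = g n) -> g @ \oo --> l -> f @ \oo --> l.
Proof.
move=> e hg; apply: cvg_trans hg; apply: near_eq_cvg.
near=> n; symmetry; near: n; exact: e.
Unshelve. all: end_near.
Qed.

Lemma cvg_lim_eq (R : realType) (f : nat -> R) (a b : R) :
  f @ \oo --> a -> a = b -> f @ \oo --> b.
Proof. by move=> h <-. Qed.

Section Main.
Variables (R : realType) (x z : R).

Definition Lf (n : nat) : R := ln (n%:R : R).
Definition sf n := Num.sqrt (2 * Lf n).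
Definition alf n := (1 + z / ln (n%:R : R)) * Gn n x / 2.
Definition yf n := alf n / 2.
Definition cf n := x - 5 / 4 * ln (sf n).
Definition uf n := (1 + 2 * z / sf n ^+ 2) * (sf n + cf n / sf n).
Definition tf n := (sf n)^-1.
Definition wf n := ln (sf n) / sf n.
Definition vf n := cf n / sf n.
Definition rf n := uf n / sf n.
Definition qf n := sf n ^+ 2 / n%:R.
Definition mf n := n%:R * sin (yf n) / sf n.
Definition Af n := n%:R ^+ 2 * (ln (cos (yf n)) + yf n ^+ 2 / 2).
Definition restf n := uf n ^+ 2 / 2 - sf n ^+ 2 / 2 - cf n - 2 * z.

Lemma Lpos {n : nat} : (2 <= n)%N -> 0 < Lf n.
Proof. by move=> n2; apply: ln_gt0; rewrite ltr1n. Qed.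

Lemma spos {n : nat} : (2 <= n)%N -> 0 < sf n.
Proof. by move=> n2; rewrite sqrtr_gt0 mulr_gt0 ?Lpos. Qed.

Lemma s2 {n : nat} : (2 <= n)%N -> sf n ^+ 2 = 2 * Lf n.
Proof. by move=> n2; rewrite sqr_sqrtr // ltW // mulr_gt0 ?Lpos. Qed.

Lemma npos {n : nat} : (2 <= n)%N -> 0 < (n%:R : R).
Proof. by move=> n2; rewrite ltr0n; case: n n2. Qed.

Lemma ny_id {n : nat} : (2 <= n)%N -> n%:R * yf n = uf n.
Proof.
move=> n2; have S0 := spos n2; have n0 := npos n2.
have hL : Lf n = sf n ^+ 2 / 2 by rewrite s2 //; field.
have hsq : Num.sqrt (32 * ln (n%:R : R)) = 4 * sf n.
  rewrite (_ : 32 * ln n%:R = 4 ^+ 2 * (2 * Lf n)); last by rewrite /Lf; ring.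
  rewrite sqrtrM ?sqrtr_sqr ?exprn_ge0 // ger0_norm //.
have hln : ln (2 * ln (n%:R : R)) = 2 * ln (sf n).
  by rewrite -/(Lf n) -(s2 n2) lnXn //; ring.
rewrite /yf /alf /Gn hsq hln /uf /cf -/(Lf n) -/(sf n) hL.
by field; rewrite ?gt_eqF.
Qed.

Lemma L_oo : Lf @ \oo --> +oo.
Proof. exact: (ln_oo _ (@cvgr_idn R)). Qed.

Lemma s_oo : sf @ \oo --> +oo.
Proof. by apply: sqrt_oo; apply: scale_oo => //; exact: L_oo. Qed.

Lemma t0 : tf @ \oo --> 0.
Proof. exact: (inv_oo _ s_oo). Qed.

Lemma w0 : wf @ \oo --> 0.
Proof. exact: (lnx_oo _ s_oo). Qed.

Lemma v0 : vf @ \oo --> 0.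
Proof.
have -> : vf = fun n => x * tf n - 5 / 4 * wf n.
  by apply/funext => n; rewrite /vf /cf /tf /wf; ring.
have -> : (0 : R) = x * 0 - 5 / 4 * 0 by ring.
apply: cvgB; apply: cvgM; try exact: cvg_cst; [exact: t0 | exact: w0].
Qed.

Lemma ev2 : \forall n \near \oo, (2 <= n)%N.
Proof. exact: nbhs_infty_ge. Qed.

Lemma q0 : qf @ \oo --> 0.
Proof.
apply: (@cvg_near_eq _ _ (fun n => 2 * (Lf n / n%:R))).
  near=> n; have n2 : (2 <= n)%N by near: n; exact: ev2.
  by rewrite /qf s2 // mulrA.
rewrite -(mulr0 2); apply: cvgM; first exact: cvg_cst.
exact: (lnx_oo _ (@cvgr_idn R)).
Unshelve. all: end_near.
Qed.

Lemma r1 : rf @ \oo --> (1 : R).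
Proof.
apply: (@cvg_near_eq _ _ (fun n => (1 + 2 * z * (tf n * tf n)) * (1 + vf n * tf n))).
  near=> n; have n2 : (2 <= n)%N by near: n; exact: ev2.
  have S0 := spos n2.
  by rewrite /rf /uf /tf /vf; field; rewrite gt_eqF.
have h1 : (fun n => 1 + 2 * z * (tf n * tf n)) @ \oo --> (1 + 2 * z * (0 * 0) : R).
  apply: cvgD; first exact: cvg_cst.
  apply: cvgM; first exact: cvg_cst.
  by apply: cvgM; exact: t0.
have h2 : (fun n => 1 + vf n * tf n) @ \oo --> (1 + 0 * 0 : R).
  apply: cvgD; first exact: cvg_cst.
  by apply: cvgM; [exact: v0 | exact: t0].
apply: cvg_lim_eq (cvgM h1 h2) _; ring.
Unshelve. all: end_near.
Qed.

End Main.

Section CvgR.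
Variable R : realType.
Implicit Types (f g : nat -> R) (a b : R).
Lemma cD f g a b : f @ \oo --> a -> g @ \oo --> b -> (fun n => f n + g n) @ \oo --> a + b.
Proof. by move=> ha hb; apply: cvgD. Qed.
Lemma cB f g a b : f @ \oo --> a -> g @ \oo --> b -> (fun n => f n - g n) @ \oo --> a - b.
Proof. by move=> ha hb; apply: cvgB. Qed.
Lemma cM f g a b : f @ \oo --> a -> g @ \oo --> b -> (fun n => f n * g n) @ \oo --> a * b.
Proof. by move=> ha hb; apply: cvgM. Qed.
Lemma cN f a : f @ \oo --> a -> (fun n => - f n) @ \oo --> - a.
Proof. by move=> ha; apply: cvgN. Qed.
Lemma cV f a : f @ \oo --> a -> a != 0 -> (fun n => (f n)^-1) @ \oo --> a^-1.
Proof. by move=> ha a0; apply: cvgV. Qed.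
Lemma cC (a : R) : (fun n : nat => a) @ \oo --> a.
Proof. exact: cvg_cst. Qed.
End CvgR.

Section Main2.
Variables (R : realType) (x z : R).
Local Notation Lf := (@Lf R).
Local Notation sf := (@sf R).
Local Notation alf := (@alf R x z).
Local Notation yf := (@yf R x z).
Local Notation cf := (@cf R x).
Local Notation uf := (@uf R x z).
Local Notation tf := (@tf R).
Local Notation wf := (@wf R).
Local Notation vf := (@vf R x).
Local Notation rf := (@rf R x z).
Local Notation qf := (@qf R).
Local Notation mf := (@mf R x z).
Local Notation Af := (@Af R x z).
Local Notation restf := (@restf R x z).
Local Notation spos := (@spos R).
Local Notation npos := (@npos R).
Local Notation Lpos := (@Lpos R).
Local Notation s2 := (@s2 R).
Local Notation ny_id := (@ny_id R x z).
Local Notation t0 := (@t0 R).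
Local Notation v0 := (@v0 R x).
Local Notation q0 := (@q0 R).
Local Notation r1 := (@r1 R x z).

Ltac solve_cvg := repeat first [ exact: cC | exact: t0 | exact: v0 | exact: q0 | exact: r1
  | apply: cD | apply: cB | apply: cM | apply: cN ].

Lemma y_eq : \forall n \near \oo, yf n = rf n * tf n * qf n.
Proof.
near=> n; have n2 : (2 <= n)%N by near: n; exact: ev2.
have S0 := spos n2; have n0 := npos n2.
have hy : yf n = uf n / n%:R by rewrite -(ny_id n2); field; rewrite gt_eqF.
by rewrite hy /rf /tf /qf; field; rewrite ?gt_eqF.
Unshelve. all: end_near.
Qed.

Lemma y0lim : yf @ \oo --> 0.
Proof.
apply: cvg_near_eq y_eq _.
apply: cvg_lim_eq; first by solve_cvg.
ring.
Qed.

Lemma ypos : \forall n \near \oo, 0 <= yf n.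
Proof.
near=> n; have n2 : (2 <= n)%N by near: n; exact: ev2.
have S0 := spos n2; have n0 := npos n2.
have -> : yf n = rf n * tf n * qf n by near: n; exact: y_eq.
have r0 : 0 < rf n by near: n; apply: (cvgr_gt 1 r1); exact: ltr01.
have tp : 0 <= tf n by rewrite /tf invr_ge0 ltW.
have qp : 0 <= qf n by rewrite /qf divr_ge0 // ?exprn_ge0 // ltW.
apply: mulr_ge0 => //; apply: mulr_ge0 => //; exact: ltW.
Unshelve. all: end_near.
Qed.

Lemma ysmall : \forall n \near \oo, yf n < 1 / 2.
Proof. by apply: (cvgr_lt 0 y0lim); rewrite divr_gt0. Qed.

Lemma m1 : mf @ \oo --> (1 : R).
Proof.
apply: (@squeeze_cvgr _ _ _ _ (fun n => rf n - rf n * (yf n * yf n) / 6) rf).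
- near=> n; have n2 : (2 <= n)%N by near: n; exact: ev2.
  have S0 := spos n2; have n0 := npos n2.
  have y0 : 0 <= yf n by near: n; exact: ypos.
  have hr : rf n = n%:R * yf n / sf n by rewrite /rf -(ny_id n2).
  have k0 : 0 <= n%:R / sf n by rewrite divr_ge0 // ltW.
  have e1 : mf n = n%:R / sf n * sin (yf n) by rewrite /mf; ring.
  have e2 : rf n = n%:R / sf n * yf n by rewrite hr; ring.
  have e3 : rf n - rf n * (yf n * yf n) / 6 = n%:R / sf n * (yf n - yf n ^+ 3 / 6).
    by rewrite e2; ring.
  rewrite e1 e3 e2; apply/andP; split; apply: ler_wpM2l => //.
    exact: sin_lb.
  exact: sin_le_x.
- apply: cvg_lim_eq; last by instantiate (1 := 1 - 1 * (0 * 0) / 6); ring.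
  apply: cB; first exact: r1.
  apply: cM; last exact: cC.
  apply: cM; first exact: r1.
  apply: cM; exact: y0lim.
- exact: r1.
Unshelve. all: end_near.
Qed.


Lemma B0 : (fun n => ln (mf n)) @ \oo --> 0.
Proof.
apply: cvg_lim_eq; last exact: ln1.
have hc : {for (1:R), continuous (@ln R)} by apply: continuous_ln; exact: ltr01.
have := continuous_cvg _ hc m1.
by apply; apply: _.
Qed.

Lemma A0 : Af @ \oo --> 0.
Proof.
apply: (@squeeze_cvgr _ _ _ _ (fun n => - (rf n * rf n * rf n * rf n * (qf n * qf n) / 2))
   (fun n => rf n * rf n * rf n * rf n * (qf n * qf n) / 2)).
- near=> n; have n2 : (2 <= n)%N by near: n; exact: ev2.
  have S0 := spos n2; have n0 := npos n2.
  have y0 : 0 <= yf n by near: n; exact: ypos.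
  have y1 : yf n < 1 / 2 by near: n; exact: ysmall.
  have y1' : yf n <= 1 by lra.
  have hb := lncos_bound (yf n) y0 y1'.
  have hK : 0 <= n%:R ^+ 2 :> R by rewrite exprn_ge0 // ltW.
  have hAf : `|Af n| <= n%:R ^+ 2 * (yf n ^+ 4 / 2).
    by rewrite /Af normrM ger0_norm //; exact: ler_wpM2l.
  have e : n%:R ^+ 2 * (yf n ^+ 4 / 2) = rf n * rf n * rf n * rf n * (qf n * qf n) / 2.
    have -> : yf n = rf n * tf n * qf n by near: n; exact: y_eq.
    by rewrite /tf /qf; field; rewrite !gt_eqF.
  by rewrite -ler_norml -e.
- apply: cvg_lim_eq; first by solve_cvg.
  ring.
- apply: cvg_lim_eq; first by solve_cvg.
  ring.
Unshelve. all: end_near.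
Qed.

Lemma rest0 : restf @ \oo --> 0.
Proof.
apply: (@cvg_near_eq _ _ (fun n => vf n * vf n / 2 + 4 * z * vf n * tf n
  + 2 * z * (vf n * vf n) * (tf n * tf n) + 2 * z * z * (tf n * tf n)
  + 4 * z * z * vf n * (tf n * tf n * tf n)
  + 2 * z * z * (vf n * vf n) * (tf n * tf n * tf n * tf n))).
  near=> n; have n2 : (2 <= n)%N by near: n; exact: ev2.
  have S0 := spos n2.
  by rewrite /restf /uf /vf /tf; field; rewrite gt_eqF.
apply: cvg_lim_eq; first by solve_cvg.
ring.
Unshelve. all: end_near.
Qed.




Lemma main_cvg (c0 : R) (hc0 : DIKZ_constant c0) :
  (fun n : nat => n%:R / sf n * Dn n (alf n)) @ \oo --> expR (c0 - x - 2 * z).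
Proof.
move: hc0 => [s0 s0pos hD].
have [C [N hCN]] := hD 1 ltr01.
set T := c0 - x - 2 * z.
pose E1 n := ln (Dn n (alf n)) - (n%:R ^+ 2 * ln (cos (yf n))
   - 4^-1 * ln (n%:R * sin (yf n)) + c0).
pose Q n := ln (Dn n (alf n)) + Lf n - ln (sf n).
have mpos : \forall n \near \oo, 0 < mf n.
  by apply: (cvgr_gt 1 m1); exact: ltr01.
have hE : E1 @ \oo --> 0.
  apply: (@squeeze_cvgr _ _ _ _ (fun n => - (C * tf n * (mf n)^-1))
     (fun n => C * tf n * (mf n)^-1)).
  - near=> n; have n2 : (2 <= n)%N by near: n; exact: ev2.
    have S0 := spos n2; have n0 := npos n2.
    have m0 : 0 < mf n by near: n; exact: mpos.
    have nN : (N <= n)%N by near: n; exact: nbhs_infty_ge.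
    have y0 : 0 <= yf n by near: n; exact: ypos.
    have y1 : yf n < 1 / 2 by near: n; exact: ysmall.
    have rh : 1 / 2 < rf n by near: n; apply: (cvgr_gt 1 r1); lra.
    have Sg : s0 < sf n by near: n; exact: (cvgry_gt (@s_oo R) s0).
    have ea : alf n = 2 * (rf n * sf n) / n%:R.
      have hy : yf n = uf n / n%:R by rewrite -(ny_id n2); field; rewrite gt_eqF.
      have hu : uf n = rf n * sf n by rewrite /rf; field; rewrite gt_eqF.
      have -> : alf n = 2 * yf n by rewrite /yf; field.
      by rewrite hy hu mulrA.
    have h1 : s0 / n%:R < alf n.
      rewrite ea ltr_pM2r ?invr_gt0 //.
      have : sf n < 2 * (rf n * sf n).
        have : 0 < (rf n - 1 / 2) * sf n by rewrite mulr_gt0 // subr_gt0.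
        lra.
      lra.
    have h2 : alf n < pi - 1.
      have := @pi_ge2 R.
      have : alf n = 2 * yf n by rewrite /yf; field.
      lra.
    have hb : `|E1 n| <= C / (n%:R * sin (yf n)).
      exact: (hCN n (alf n) (ltnW n2) nN h1 h2).
    have hm : n%:R * sin (yf n) = mf n * sf n by rewrite /mf; field; rewrite gt_eqF.
    have e : C / (n%:R * sin (yf n)) = C * tf n * (mf n)^-1.
      by rewrite hm /tf; field; rewrite !gt_eqF.
    by rewrite -ler_norml -e.
  - apply: cvg_lim_eq.
      apply: cN; apply: cM; first by apply: cM; [exact: cC | exact: t0].
      by apply: cV; [exact: m1 | exact: oner_neq0].
    by rewrite mulr0 mul0r oppr0.
  - apply: cvg_lim_eq.
      apply: cM; first by apply: cM; [exact: cC | exact: t0].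
      by apply: cV; [exact: m1 | exact: oner_neq0].
    by rewrite mulr0 mul0r.
have hQ : Q @ \oo --> T.
  apply: (@cvg_near_eq _ _ (fun n => E1 n + Af n - restf n - ln (mf n) / 4 + T)).
    near=> n; have n2 : (2 <= n)%N by near: n; exact: ev2.
    have S0 := spos n2; have n0 := npos n2.
    have m0 : 0 < mf n by near: n; exact: mpos.
    have hm : n%:R * sin (yf n) = mf n * sf n by rewrite /mf; field; rewrite gt_eqF.
    rewrite /Q /E1 /Af /restf /cf /T hm lnM ?posrE // -(ny_id n2) (s2 n2).
    by field.
  apply: cvg_lim_eq.
    apply: cD; last exact: cC.
    apply: cB; last by apply: cM; [exact: B0 | exact: cC].
    apply: cB; last exact: rest0.
    apply: cD; [exact: hE | exact: A0].
  rewrite /T; ring.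
have Dpos : \forall n \near \oo, 0 < Dn n (alf n).
  near=> n; have n2 : (2 <= n)%N by near: n; exact: ev2.
  have S0 := spos n2.
  have hQl : Q n < T + 1 by near: n; apply: (cvgr_lt T hQ); lra.
  have Sb : Num.max 4 (T + 1) <= sf n by near: n; exact: (cvgry_ge (@s_oo R) _).
  have S4 : 4 <= sf n by apply: le_trans Sb; rewrite le_max lexx.
  have ST : T + 1 <= sf n by apply: le_trans Sb; rewrite le_max lexx orbT.
  case: (ltrP 0 (Dn n (alf n))) => // hle; exfalso.
  move: hQl; rewrite /Q (ln0 hle) add0r.
  have hl := ln_sublinear S0.
  have hL : Lf n = sf n ^+ 2 / 2 by rewrite (s2 n2); field.
  rewrite hL.
  have : 0 <= sf n ^+ 2 / 2 - 2 * sf n.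
    rewrite (_ : sf n ^+ 2 / 2 - 2 * sf n = sf n * (sf n / 2 - 2)); last by field.
    apply: mulr_ge0; lra.
  lra.
apply: (@cvg_near_eq _ _ (fun n => expR (Q n))).
  near=> n; have n2 : (2 <= n)%N by near: n; exact: ev2.
  have S0 := spos n2; have n0 := npos n2.
  have Dp : 0 < Dn n (alf n) by near: n; exact: Dpos.
  rewrite /Q /Lf expRB expRD !lnK ?posrE //.
  by rewrite mulrC mulrA.
have := continuous_cvg _ (@continuous_expR R T) hQ.
by apply; apply: _.
Unshelve. all: end_near.
Qed.

End Main2.

Theorem lemma8 (R : realType) (c0 : R) (hc0 : DIKZ_constant c0) (x z : R) :
  (fun n : nat =>
     n%:R / Num.sqrt (2 * ln (n%:R : R))
     * Dn n ((1 + z / ln (n%:R : R)) * Gn n x / 2))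
    @ \oo --> expR (c0 - x - 2 * z).
Proof. exact: (@main_cvg R x z c0 hc0). Qed.
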